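(* Let $\{x_i\}_{i\in[N]}$ be the global solution of the delayed consensus system described in the context. Then for all $K\in\mathbb{N}$, \[ \Delta^K_x\le\Delta^0_x+(1+\sigma)\Delta^{K-1}_x+\sigma\sum_{k=0}^{K-1}\Delta^k_x. \]
   Context: Let $N\ge2$, $d\ge1$ be integers, $[N]=\{1,\dots,N\}$, $0\le\sigma\le\tau$. Let $\psi:[0,\infty)\to[0,\infty)$ be continuous, nonincreasing, positive everywhere, with $\sup\psi\le1$. Given $x_i^0\in C([-\tau,0],\mathbb{R}^d)$, $\{x_i\}$ is the global solution (continuous on $[-\tau,\infty)$, continuously differentiable on $[0,\infty)$) of $\dot x_i(t)=\sum_{j\ne i}a_{ij}(t)(x_j(t-\tau)-x_i(t-\sigma))$ for $t>0$, with $a_{ij}(t)=\frac1{N-1}\psi(|x_i(t-\sigma)-x_j(t-\tau)|)$, and $x_i=x_i^0$ on $[-\tau,0]$. Define $\Delta^0_x:=\max_{i,j\in[N]}\max_{s,t\in[-\tau,0]}|x_i^0(s)-x_j^0(t)|$ and, for $K\in\mathbb{N}$ ($K\ge1$), \[ \Delta^K_x:=\max_{i,j\in[N]}\max_{t\in[-\tau,K\sigma]}\max_{s\in[(K-1)\sigma,K\sigma]}|x_j(t)-x_i(s)|. \] *)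

(* Defs.v *)
From HB Require Import structures.
From mathcomp Require Import all_boot all_order all_algebra.
From mathcomp Require Import all_classical all_reals all_analysis.
Set Implicit Arguments. Unset Strict Implicit. Unset Printing Implicit Defensive.
Import Order.TTheory GRing.Theory Num.Theory.
Import numFieldNormedType.Exports.
Local Open Scope classical_set_scope.
Local Open Scope ring_scope.

Definition enorm {R : realType} {d : nat} (v : 'rV[R]_d) : R :=
  Num.sqrt (\sum_(k < d) v ord0 k ^+ 2).

Definition cs_rhs {R : realType} {N d : nat} (psi : R -> R) (sigma tau : R)
  (x : 'I_N -> R -> 'rV[R]_d) (i : 'I_N) (t : R) : 'rV[R]_d :=
  \sum_(j < N | j != i)
     (((N%:R - 1)^-1 * psi (enorm (x i (t - sigma) - x j (t - tau))))
        *: (x j (t - tau) - x i (t - sigma))).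

(* x is a global solution: continuous on [-tau, oo), differentiable for t > 0,
   satisfying the ODE for t > 0 (the initial data are the restrictions of x to
   [-tau, 0]). *)
Definition is_global_solution {R : realType} {N d : nat} (psi : R -> R)
  (sigma tau : R) (x : 'I_N -> R -> 'rV[R]_d) : Prop :=
  (forall i, {within `[- tau, +oo[, continuous (x i)}) /\
  (forall i (t : R), 0 < t -> derivable (x i) t 1) /\
  (forall i (t : R), 0 < t -> derive1 (x i) t = cs_rhs psi sigma tau x i t).

(* Delta^0_x and Delta^K_x (K >= 1), the maxima being written as suprema *)
Definition Delta {R : realType} {N d : nat} (sigma tau : R)
  (x : 'I_N -> R -> 'rV[R]_d) (K : nat) : R :=
  if K is 0 then
    sup [set r | exists (i j : 'I_N) (s t : R),
           [/\ - tau <= s <= 0, - tau <= t <= 0 & r = enorm (x i s - x j t)]]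
  else
    sup [set r | exists (i j : 'I_N) (t s : R),
           [/\ - tau <= t <= K%:R * sigma,
               K.-1%:R * sigma <= s <= K%:R * sigma
             & r = enorm (x j t - x i s)]].

(* Main.v *)
Require Import Defs.
From HB Require Import structures.
From mathcomp Require Import all_boot all_order all_algebra.
From mathcomp Require Import all_classical all_reals all_analysis.
From mathcomp Require Import ring lra.
Import Order.TTheory GRing.Theory Num.Theory.
Import numFieldNormedType.Exports.
Local Open Scope classical_set_scope.
Local Open Scope ring_scope.

Definition dot {R : realType} {d : nat} (u v : 'rV[R]_d) : R :=
  \sum_(k < d) u ord0 k * v ord0 k.

Lemma dotvv {R : realType} {d : nat} (v : 'rV[R]_d) :
  dot v v = \sum_(k < d) v ord0 k ^+ 2.
Proof. by apply: eq_bigr => k _; rewrite expr2. Qed.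

Lemma dot_ge0 {R : realType} {d : nat} (v : 'rV[R]_d) : 0 <= dot v v.
Proof. by rewrite dotvv; apply: sumr_ge0 => k _; exact: sqr_ge0. Qed.

Lemma enorm_sq {R : realType} {d : nat} (v : 'rV[R]_d) : enorm v ^+ 2 = dot v v.
Proof. by rewrite /enorm -dotvv sqr_sqrtr // dot_ge0. Qed.

Lemma enorm_ge0 {R : realType} {d : nat} (v : 'rV[R]_d) : 0 <= enorm v.
Proof. exact: sqrtr_ge0. Qed.

Lemma enorm0_coord {R : realType} {d : nat} (v : 'rV[R]_d) k :
  enorm v = 0 -> v ord0 k = 0.
Proof.
move=> h; have : dot v v = 0 by rewrite -enorm_sq h expr0n.
rewrite dotvv => /psumr_eq0P => /(_ (fun k _ => sqr_ge0 _) k isT).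
by move/eqP; rewrite sqrf_eq0 => /eqP.
Qed.

Lemma dot0l {R : realType} {d : nat} (u v : 'rV[R]_d) :
  enorm u = 0 -> dot u v = 0.
Proof.
move=> h; rewrite /dot big1 // => k _; by rewrite (enorm0_coord u k h) mul0r.
Qed.

Lemma dotC {R : realType} {d : nat} (u v : 'rV[R]_d) : dot u v = dot v u.
Proof. by apply: eq_bigr => k _; rewrite mulrC. Qed.

Lemma CS {R : realType} {d : nat} (u v : 'rV[R]_d) :
  dot u v <= enorm u * enorm v.
Proof.
have [a0|ua] := eqVneq (enorm u) 0.
  by rewrite dot0l // a0 mul0r.
have [b0|vb] := eqVneq (enorm v) 0.
  by rewrite dotC dot0l // b0 mulr0.
set a := enorm u; set b := enorm v.
have a0 : 0 < a by rewrite lt_def ua enorm_ge0.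
have b0 : 0 < b by rewrite lt_def vb enorm_ge0.
have key : 2 * a * b * dot u v <= 2 * (a ^+ 2 * b ^+ 2).
  have -> : 2 * (a ^+ 2 * b ^+ 2) = b ^+ 2 * dot u u + a ^+ 2 * dot v v.
    by rewrite /a /b !enorm_sq; ring.
  rewrite /dot !mulr_sumr -big_split /=; apply: ler_sum => k _.
  have := sqr_ge0 (b * u ord0 k - a * v ord0 k); nra.
have h2 : 0 < 2 * a * b by rewrite !mulr_gt0.
nra.
Qed.

Lemma dotDl {R : realType} {d : nat} (u v w : 'rV[R]_d) :
  dot (u + v) w = dot u w + dot v w.
Proof. by rewrite /dot -big_split; apply: eq_bigr => k _; rewrite !mxE mulrDl. Qed.

Lemma dotNl {R : realType} {d : nat} (u w : 'rV[R]_d) :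
  dot (- u) w = - dot u w.
Proof. by rewrite /dot -sumrN; apply: eq_bigr => k _; rewrite !mxE mulNr. Qed.

Lemma dotBl {R : realType} {d : nat} (u v w : 'rV[R]_d) :
  dot (u - v) w = dot u w - dot v w.
Proof. by rewrite dotDl dotNl. Qed.

Lemma dotZl {R : realType} {d : nat} (c : R) (u w : 'rV[R]_d) :
  dot (c *: u) w = c * dot u w.
Proof. by rewrite /dot mulr_sumr; apply: eq_bigr => k _; rewrite !mxE mulrA. Qed.

Lemma dot_suml {R : realType} {d : nat} (I : finType) (P : pred I)
  (F : I -> 'rV[R]_d) w :
  dot (\sum_(j | P j) F j) w = \sum_(j | P j) dot (F j) w.
Proof.
elim/big_rec2: _ => [|j y1 y2 _ <-]; last by rewrite dotDl.
by rewrite /dot big1 // => k _; rewrite mxE mul0r.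
Qed.

Lemma enorm_triangle {R : realType} {d : nat} (u v : 'rV[R]_d) :
  enorm (u + v) <= enorm u + enorm v.
Proof.
rewrite -(ger0_norm (addr_ge0 (enorm_ge0 u) (enorm_ge0 v))) -sqrtr_sqr.
rewrite /enorm -dotvv ler_sqrt; last exact: sqr_ge0.
have -> : dot (u + v) (u + v) = dot u u + 2 * dot u v + dot v v.
  rewrite /dot mulr_sumr -!big_split /=.
  by apply: eq_bigr => k _; rewrite !mxE; ring.
have := CS u v; rewrite -!enorm_sq -!/(enorm _); nra.
Qed.

Lemma enormN {R : realType} {d : nat} (u : 'rV[R]_d) : enorm (- u) = enorm u.
Proof. by rewrite /enorm; congr Num.sqrt; apply: eq_bigr => k _; rewrite mxE sqrrN. Qed.

Lemma enormB {R : realType} {d : nat} (u v : 'rV[R]_d) : enorm (u - v) = enorm (v - u).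
Proof. by rewrite -enormN opprB. Qed.

Lemma enorm_zero {R : realType} {d : nat} : enorm (0 : 'rV[R]_d) = 0.
Proof. by rewrite /enorm big1 ?sqrtr0 // => k _; rewrite mxE expr0n. Qed.

Lemma dot_derive {R : realType} {d : nat} (y : R -> 'rV[R]_d) (w : 'rV[R]_d) r :
  derivable y r 1 -> is_derive r 1 (fun t => dot (y t) w) (dot ('D_1 y r) w).
Proof.
move=> dy.
have dc k : is_derive r 1 (fun t => y t ord0 k) ('D_1 y r ord0 k).
  rewrite derive_mx // mxE; apply: derivableP.
  by move/derivable_mxP : dy; apply.
have -> : (fun t => dot (y t) w) = \sum_(k < d) (fun t => y t ord0 k * w ord0 k).
  by rewrite fct_sumE; apply/funext => t.
rewrite /dot; apply: is_derive_sum => k.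
have -> : (fun t => y t ord0 k * w ord0 k) = (fun t => y t ord0 k) * cst (w ord0 k).
  by apply/funext.
have := is_deriveM (dc k) (is_derive_cst (w ord0 k) r 1).
move=> H; apply: (is_derive_eq H).
by rewrite scaler0 add0r [RHS]mulrC.
Qed.

Lemma dot_cont {R : realType} {d : nat} (A : set R) (y : R -> 'rV[R]_d) w :
  {within A, continuous y} -> {within A, continuous (fun t => dot (y t) w)}.
Proof.
move=> cy z.
have Lc : continuous (fun v : 'rV[R]_d => dot v w).
  move=> v; rewrite /dot.
  have -> : (fun v : 'rV[R]_d => \sum_(k < d) v ord0 k * w ord0 k)
     = \sum_(k < d) (fun v : 'rV[R]_d => v ord0 k * w ord0 k).
    by rewrite fct_sumE.
  elim/big_ind: _ => //.
  - exact: cst_continuous.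
  - by move=> f g cf cg; apply: continuousD.
  - move=> k _; apply: continuousM; first exact: coord_continuous.
    exact: cst_continuous.
exact: (continuous_comp (cy z) (Lc _)).
Qed.

Lemma sup_ge0 {R : realType} (E : set R) : (forall r, E r -> 0 <= r) -> 0 <= sup E.
Proof.
move=> h; have [[[e Ee] ub]|nh] := pselect (has_sup E).
  exact: le_trans (h e Ee) (ub_le_sup ub Ee).
by rewrite sup_out.
Qed.

Lemma iv {R : realType} (p q r : R) : p <= q -> q <= r -> p <= q <= r.
Proof. by move=> *; apply/andP. Qed.

Lemma L_aux {R : realType} {N d : nat} (sigma tau : R) (x : 'I_N -> R -> 'rV[R]_d)
  (k : nat) (B : R) : 0 <= sigma -> sigma <= tau ->
  (forall i j t s, -tau <= t <= k%:R * sigma + sigma ->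
      -tau <= s <= k%:R * sigma + sigma -> enorm (x j t - x i s) <= B) ->
  forall i j u v, -tau <= u <= k%:R * sigma -> k%:R * sigma - sigma <= v <= k%:R * sigma ->
     -tau <= v -> enorm (x j u - x i v) <= Delta sigma tau x k.
Proof.
move=> s0 st bnd i j u v /andP[u1 u2] /andP[v1 v2] v3.
have k0 : 0 <= k%:R * sigma by rewrite mulr_ge0.
case: k bnd k0 u1 u2 v1 v2 v3 => [|k] bnd k0 u1 u2 v1 v2 v3 /=.
- rewrite mul0r in bnd u2 v1 v2 *.
  apply: ub_le_sup; last by exists j, i, u, v; split => //; apply: iv.
  exists B => r [i' [j' [s' [t' [/andP[? ?] /andP[? ?] ->]]]]].
  by apply: bnd; apply: iv => //; lra.
- have ek : k.+1%:R * sigma = k%:R * sigma + sigma by rewrite -natr1 mulrDl mul1r.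
  have k1 : 0 <= k%:R * sigma by rewrite mulr_ge0.
  rewrite ek in bnd u2 v1 v2 k0 *.
  apply: ub_le_sup; last first.
    exists i, j, u, v; split => //; apply: iv => //; lra.
  exists B => r [i' [j' [t' [s' [/andP[? ?] /andP[? ?] ->]]]]].
  by apply: bnd; apply: iv => //; lra.
Qed.

Lemma mvt_aux {R : realType} {N d : nat} (sigma tau : R) (psi : R -> R)
  (x : 'I_N -> R -> 'rV[R]_d) (a D : R) :
  (2 <= N)%N -> 0 <= sigma -> sigma <= tau ->
  (forall r : R, 0 <= r -> 0 < psi r) ->
  (forall r : R, 0 <= r -> psi r <= 1) ->
  is_global_solution psi sigma tau x -> 0 <= a -> 0 <= D ->
  (forall i j u v, -tau <= u <= a -> a - sigma <= v <= a ->
     -tau <= v -> enorm (x j u - x i v) <= D) ->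
  forall i s, a <= s <= a + sigma -> enorm (x i s - x i a) <= sigma * D.
Proof.
move=> N2 s0 st psipos psi1 [xc [xd xe]] a0 D0 L i s /andP[as1 sa].
have [eas|ltas] : a = s \/ a < s.
  by move: as1; rewrite le_eqVlt => /orP[/eqP->|->]; [left|right].
  by rewrite eas subrr enorm_zero mulr_ge0.
set w := x i s - x i a.
have hd : forall r, r \in `]a, s[ -> is_derive r 1 (fun t => dot (x i t) w) (dot ('D_1 (x i) r) w).
  move=> r rin; apply: dot_derive; apply: xd.
  by apply: le_lt_trans a0 _; rewrite (itvP rin).
have hc : {within `[a, s], continuous (fun t => dot (x i t) w)}.
  apply: dot_cont; apply: continuous_subspaceW (xc i).
  move=> r /=; rewrite !in_itv /= => /andP[ar _]; rewrite andbT; lra.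
have [c cin eq] := MVT ltas hd hc.
have ac : a < c by rewrite (itvP cin).
have cs : c < s by rewrite (itvP cin).
have c0 : 0 < c by apply: le_lt_trans a0 ac.
rewrite -dotBl -/w -derive1E xe // in eq.
have hN1 : (1 < N%:R :> R) by rewrite ltr1n.
have hN : 0 < (N%:R - 1 : R)^-1 by rewrite invr_gt0 subr_gt0.
have bnd : dot (cs_rhs psi sigma tau x i c) w <= D * enorm w.
  rewrite /cs_rhs dot_suml.
  apply: (@le_trans _ _ (\sum_(j < N | j != i) ((N%:R - 1)^-1 * (D * enorm w)))).
    apply: ler_sum => j _; rewrite dotZl.
    have hp := psipos _ (enorm_ge0 (x i (c - sigma) - x j (c - tau))).
    have hp1 := psi1 _ (enorm_ge0 (x i (c - sigma) - x j (c - tau))).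
    have hdot := CS (x j (c - tau) - x i (c - sigma)) w.
    have hL : enorm (x j (c - tau) - x i (c - sigma)) <= D.
      by apply: L; try apply: iv; lra.
    rewrite -mulrA ler_pM2l //.
    apply: (@le_trans _ _ (psi (enorm (x i (c - sigma) - x j (c - tau))) * (D * enorm w))).
      rewrite ler_pM2l //; apply: le_trans hdot _.
      by rewrite ler_wpM2r ?enorm_ge0.
    by rewrite ler_piMl ?mulr_ge0 ?enorm_ge0.
  have -> : \sum_(j < N | j != i) ((N%:R - 1)^-1 * (D * enorm w)) =
     ((N%:R - 1)^-1 * (D * enorm w)) *+ N.-1.
    by rewrite (eq_bigl (fun j => j \in predC1 i)) // sumr_const cardC1 card_ord.
  rewrite -mulr_natr -subn1 natrB ?(ltnW N2) // mulrC mulrA mulfV ?mul1r //.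
  by rewrite subr_eq0 gt_eqF.
have e2 : enorm w ^+ 2 <= D * enorm w * sigma.
  rewrite enorm_sq eq.
  have h1 : 0 <= (D * enorm w - dot (cs_rhs psi sigma tau x i c) w) * (s - a).
    by rewrite mulr_ge0 // subr_ge0 // ltW.
  have h2 : 0 <= (D * enorm w) * (sigma - (s - a)).
    by rewrite mulr_ge0 ?mulr_ge0 ?enorm_ge0 // subr_ge0 lerBlDl.
  nra.
have [->|wn] := eqVneq (enorm w) 0; first by rewrite mulr_ge0.
have wp : 0 < enorm w by rewrite lt_def wn enorm_ge0.
rewrite expr2 -mulrA [D * _]mulrC -!mulrA ler_pM2l // in e2.
Qed.

Lemma sup_le_case {R : realType} (E : set R) (B : R) : 0 <= B ->
  (forall M, ubound E M -> E !=set0 -> sup E <= B) -> sup E <= B.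
Proof.
move=> B0 h; have [[ne [M ubM]]|nh] := pselect (has_sup E); first exact: h ubM ne.
by rewrite sup_out.
Qed.

Theorem lemma3p6 (R : realType) (N d : nat) (sigma tau : R) (psi : R -> R)
  (x : 'I_N -> R -> 'rV[R]_d) :
  (2 <= N)%N -> (1 <= d)%N ->
  0 <= sigma -> sigma <= tau ->
  {within `[0, +oo[, continuous psi} ->
  (forall r s : R, 0 <= r -> r <= s -> psi s <= psi r) ->
  (forall r : R, 0 <= r -> 0 < psi r) ->
  (forall r : R, 0 <= r -> psi r <= 1) ->
  is_global_solution psi sigma tau x ->
  forall K : nat, (1 <= K)%N ->
    Delta sigma tau x K <=
      Delta sigma tau x 0 + (1 + sigma) * Delta sigma tau x K.-1
      + sigma * \sum_(k < K) Delta sigma tau x k.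
Proof.
move=> N2 d1 s0 st psic psidec psipos psi1 gs K K1.
have Dge0 : forall k, 0 <= Delta sigma tau x k.
  move=> k; rewrite /Delta; case: k => [|k]; apply: sup_ge0;
    by move=> r [i [j [s [t [_ _ ->]]]]]; exact: enorm_ge0.
case: K K1 => [//|Kp] _.
set a := Kp%:R * sigma.
have eK : Kp.+1%:R * sigma = a + sigma by rewrite -natr1 mulrDl mul1r.
have a0 : 0 <= a by rewrite mulr_ge0.
set D := Delta sigma tau x Kp.
have RHSge : (1 + 2 * sigma) * D <= Delta sigma tau x 0 + (1 + sigma) * Delta sigma tau x Kp.+1.-1
      + sigma * \sum_(k < Kp.+1) Delta sigma tau x k.
  set D00 := Delta sigma tau x 0; rewrite big_ord_recr /= -/D.
  have h1 : 0 <= D00 by apply: Dge0.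
  have h2 : 0 <= \sum_(k < Kp) Delta sigma tau x k by apply: sumr_ge0.
  have h3 : 0 <= sigma * \sum_(k < Kp) Delta sigma tau x k by apply: mulr_ge0.
  have D0 : 0 <= D by apply: Dge0.
  rewrite mulrDr; nra.
apply: le_trans RHSge.
have D0 : 0 <= D by apply: Dge0.
rewrite {1}/Delta eK /=.
apply: sup_le_case; first by rewrite mulr_ge0 // addr_ge0 // mulr_ge0.
move=> M ubM ne.
have bnd : forall i j t s, -tau <= t <= a + sigma -> -tau <= s <= a + sigma ->
    enorm (x j t - x i s) <= M + M.
  move=> i j t s ht hs.
  have -> : x j t - x i s = (x j t - x i (a + sigma)) + (x i (a + sigma) - x i s).
    by rewrite addrA subrK.
  apply: le_trans (enorm_triangle _ _) _; apply: lerD.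
    apply: ubM; exists i, j, t, (a + sigma); split => //; apply: iv; lra.
  rewrite enormB; apply: ubM; exists i, i, s, (a + sigma); split => //; apply: iv; lra.
have L := @L_aux R N d sigma tau x Kp (M + M) s0 st bnd.
have mv := @mvt_aux R N d sigma tau psi x a D N2 s0 st psipos psi1 gs a0 D0 L.
apply: ge_sup => //.
move=> r [i [j [t [s [/andP[t1 t2] /andP[s1 s2] ->]]]]].
have hs : enorm (x i a - x i s) <= sigma * D by rewrite enormB; apply: mv; apply: iv.
have [ta|lat] := lerP t a.
  have -> : x j t - x i s = (x j t - x i a) + (x i a - x i s) by rewrite addrA subrK.
  apply: le_trans (enorm_triangle _ _) _.
  have h1 : enorm (x j t - x i a) <= D by apply: L; try apply: iv; lra.
  have := enorm_ge0 (x j t - x i a); nra.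
have -> : x j t - x i s = (x j t - x j a) + ((x j a - x i a) + (x i a - x i s)).
  by rewrite !addrA subrK subrK.
apply: le_trans (enorm_triangle _ _) _.
have h1 : enorm (x j t - x j a) <= sigma * D by apply: mv; apply: iv; lra.
have h2 : enorm (x j a - x i a) <= D by apply: L; try apply: iv; lra.
have h3 := enorm_triangle (x j a - x i a) (x i a - x i s).
lra.
Qed.
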